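(* Let $G=(U,\alpha)$ and $H=(V,\beta)$ be connected graphs. Then $G$ and $H$ are weakly disjoint if and only if their transition matrices share no eigenvalue other than $1$.
   Context: A weight function on a finite set $U$ is a map $\alpha:U\times U\to\mathbb{R}$ with $\alpha\ge 0$, $\alpha(u,u')=\alpha(u',u)$, and $\sum_{u,u'\in U}\alpha(u,u')=1$; its degree function is $p(u)=\sum_{u'\in U}\alpha(u,u')$. A graph is a pair $G=(U,\alpha)$ with $U$ finite and $\alpha$ a weight function on $U$; its edge set is $E(G)=\{(u,u'):\alpha(u,u')>0\}$ (self-loops allowed). $G$ is connected if every two distinct vertices are joined by a path of edges; $G$ is fully supported if $p(u)>0$ for all $u$. For graphs $G=(U,\alpha)$, $H=(V,\beta)$ with degree functions $p,q$, a weight joining of $\alpha$ and $\beta$ is a weight function $\gamma$ on $U\times V$ whose degree function $r(u,v)=\sum_{(u',v')}\gamma((u,v),(u',v'))$ satisfies (a) $\sum_{v}r(u,v)=p(u)$ and $\sum_u r(u,v)=q(v)$ for all $u,v$, and (b) $p(u)\sum_{\tilde v\in V}\gamma((u,v),(u',\tilde v))=\alpha(u,u')r(u,v)$ and $q(v)\sum_{\tilde u\in U}\gamma((u,v),(\tilde u,v'))=\beta(v,v')r(u,v)$ for all $u,u'\in U$, $v,v'\in V$. A graph joining of $G$ and $H$ is a graph $K=(U\times V,\gamma)$ with $\gamma$ a weight joining of $\alpha,\beta$; $\mathcal{J}(G,H)$ denotes the set of these. $G$ and $H$ are weakly disjoint if every $K\in\mathcal{J}(G,H)$ has degree function equal to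 $p\otimes q$, i.e. $r(u,v)=p(u)q(v)$. The transition matrix of a fully supported graph $G=(U,\alpha)$ with $U=\{u_1,\dots,u_m\}$ is the $m\times m$ matrix with entries $\alpha(u_i,u_j)/p(u_i)$. *)

(* Defs.v *)
From HB Require Import structures.
From mathcomp Require Import all_boot all_order all_algebra.
From mathcomp Require Import reals.
Set Implicit Arguments. Unset Strict Implicit. Unset Printing Implicit Defensive.
Import Order.TTheory GRing.Theory Num.Theory.
Local Open Scope ring_scope.

Section GraphDefs.
Variable R : realType.

Definition is_weight (U : finType) (alpha : U -> U -> R) : Prop :=
  (forall u u', 0 <= alpha u u') /\
  (forall u u', alpha u u' = alpha u' u) /\
  (\sum_(u : U) \sum_(u' : U) alpha u u' = 1).

Definition deg (U : finType) (alpha : U -> U -> R) (u : U) : R :=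
  \sum_(u' : U) alpha u u'.

Definition edge_rel (U : finType) (alpha : U -> U -> R) : rel U :=
  fun u u' => 0 < alpha u u'.

Definition connected_graph (U : finType) (alpha : U -> U -> R) : Prop :=
  forall u u' : U, u != u' -> connect (edge_rel alpha) u u'.

Definition fully_supported (U : finType) (alpha : U -> U -> R) : Prop :=
  forall u, 0 < deg alpha u.

Definition weight_joining (U V : finType) (alpha : U -> U -> R)
  (beta : V -> V -> R) (gamma : (U * V)%type -> (U * V)%type -> R) : Prop :=
  is_weight gamma /\
  (forall u, \sum_(v : V) deg gamma (u, v) = deg alpha u) /\
  (forall v, \sum_(u : U) deg gamma (u, v) = deg beta v) /\
  (forall (u u' : U) (v : V),
      deg alpha u * (\sum_(vt : V) gamma (u, v) (u', vt))
      = alpha u u' * deg gamma (u, v)) /\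
  (forall (u : U) (v v' : V),
      deg beta v * (\sum_(ut : U) gamma (u, v) (ut, v'))
      = beta v v' * deg gamma (u, v)).

Definition weakly_disjoint (U V : finType) (alpha : U -> U -> R)
  (beta : V -> V -> R) : Prop :=
  forall gamma, weight_joining alpha beta gamma ->
    forall u v, deg gamma (u, v) = deg alpha u * deg beta v.

Definition trans_mx (U : finType) (alpha : U -> U -> R) : 'M[R]_#|U| :=
  \matrix_(i, j) (alpha (enum_val i) (enum_val j) / deg alpha (enum_val i)).

End GraphDefs.

(* Main.v *)
Require Import Defs.
From HB Require Import structures.
From mathcomp Require Import all_boot all_order all_algebra.
From mathcomp Require Import reals complex ring lra.
Import Order.TTheory GRing.Theory Num.Theory.
Local Open Scope ring_scope.

Lemma expand4 (K : comPzRingType) (A S x y xc yc : K) :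
  A * ((x - S*y) * (xc - S*yc)) =
  A*(x*xc) - S*(A*(x*yc)) - S*(A*(y*xc)) + S*S*(A*(y*yc)).
Proof. ring. Qed.

Lemma expand_s (K : comPzRingType) (S N : K) : S * S = 1 ->
  N - S*(S*N) - S*(S*N) + S*S*N = 0.
Proof. move=> h; rewrite !mulrA h; ring. Qed.

Lemma mulCA3 (K : comPzRingType) (x y z : K) : x * (y * z) = y * x * z.
Proof. ring. Qed.

Section Cx.
Variable R : rcfType.
Local Notation C := (R[i]).
Local Notation toC := (real_complex R).

Lemma toC_real (x : R) : toC x \is Num.real.
Proof. by apply/complex_realP; exists x. Qed.

Lemma toC_conj (x : R) : (toC x)^* = toC x.
Proof. by apply: conj_Creal; apply: toC_real. Qed.

Lemma toC_ge0 (x : R) : (0 <= toC x) = (0 <= x).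
Proof. exact: ler0c. Qed.

Lemma toC_gt0 (x : R) : (0 < toC x) = (0 < x).
Proof. by rewrite lt_def ler0c lt_def (inj_eq (@complexI R)). Qed.

Lemma energy (I : finType) (a : I -> I -> R) (pa : I -> R) (s : R) (w : I -> C) :
  (forall i j, 0 <= a i j) -> (forall i j, a i j = a j i) ->
  (forall i, pa i = \sum_j a i j) -> s * s = 1 ->
  (forall j, \sum_i w i * toC (a i j) = toC (s * pa j) * w j) ->
  forall i j, 0 < a i j -> w i = toC s * w j.
Proof.
move=> a0 asym hpa hs heig.
pose E := \sum_i \sum_j toC (a i j) * ((w i - toC s * w j) * (w i - toC s * w j)^*).
have term0 : forall i j, 0 <= toC (a i j) * ((w i - toC s * w j) * (w i - toC s * w j)^*).
  by move=> i j; rewrite mulr_ge0 // ?toC_ge0 // -normCK exprn_ge0.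
pose N := \sum_j toC (pa j) * (w j * (w j)^*).
have T1 : \sum_i \sum_j toC (a i j) * (w i * (w i)^*) = N.
  apply: eq_bigr => i _; rewrite -mulr_suml hpa; congr (_ * _).
  by rewrite rmorph_sum.
have T4 : \sum_i \sum_j toC (a i j) * (w j * (w j)^*) = N.
  rewrite exchange_big; apply: eq_bigr => j _; rewrite -mulr_suml hpa rmorph_sum.
  by congr (_ * _); apply: eq_bigr => i _; rewrite asym.
have T2 : \sum_i \sum_j toC (a i j) * (w i * (w j)^*) = toC s * N.
  rewrite exchange_big mulr_sumr; apply: eq_bigr => j _.
  transitivity ((\sum_i w i * toC (a i j)) * (w j)^*).
    by rewrite mulr_suml; apply: eq_bigr => i _; ring.
  by rewrite heig rmorphM /=; ring.
have T3 : \sum_i \sum_j toC (a i j) * (w j * (w i)^*) = toC s * N.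
  rewrite -T2 exchange_big; apply: eq_bigr => i _; apply: eq_bigr => j _.
  by rewrite asym.
have EE : E = \sum_i \sum_j toC (a i j) * (w i * (w i)^*)
   - toC s * \sum_i \sum_j toC (a i j) * (w i * (w j)^*)
   - toC s * \sum_i \sum_j toC (a i j) * (w j * (w i)^*)
   + toC s * toC s * \sum_i \sum_j toC (a i j) * (w j * (w j)^*).
  rewrite !mulr_sumr -!sumrB -big_split /=.
  apply: eq_bigr => i _; rewrite !mulr_sumr -!sumrB -big_split /=.
  apply: eq_bigr => j _; rewrite rmorphB rmorphM /= toC_conj.
move: (toC (a i j)) (toC s) (w i) (w j) ((w i)^*) ((w j)^*) => A S x y xc yc.
exact: expand4.
have E0 : E = 0.
  rewrite EE T1 T2 T3 T4; apply: expand_s.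
  by rewrite -rmorphM hs rmorph1.
move=> i j aij.
have h1 := psumr_eq0P (fun k _ => sumr_ge0 _ (fun l _ => term0 k l)) E0.
have := psumr_eq0P (fun l _ => term0 i l) (h1 i isT); move=> /(_ j isT) /eqP.
have an : (toC (a i j) == 0) = false by rewrite fmorph_eq0 gt_eqF.
by rewrite mulf_eq0 an -normCK expf_eq0 /= normr_eq0 subr_eq0 => /eqP.
Qed.

Lemma eig_real (I : finType) (a : I -> I -> R) (pa : I -> R) (w : I -> C) (z : C) :
  (forall i j, 0 <= a i j) -> (forall i j, a i j = a j i) ->
  (forall i, 0 < pa i) -> (exists i, w i != 0) ->
  (forall j, \sum_i w i * toC (a i j) = z * toC (pa j) * w j) -> z \is Num.real.
Proof.
move=> a0 asym pa0 [i0 wi0] heig.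
pose S := \sum_j \sum_i toC (a i j) * (w i * (w j)^*).
pose N := \sum_j toC (pa j) * (w j * (w j)^*).
have term0 : forall j, 0 <= toC (pa j) * (w j * (w j)^*).
  by move=> j; apply: mulr_ge0; [rewrite toC_ge0 ltW | rewrite -normCK exprn_ge0].
have N0 : 0 <= N by apply: sumr_ge0 => j _; apply: term0.
have Nn0 : N != 0.
  apply/negP => /eqP hN.
  have := psumr_eq0P (fun j _ => term0 j) hN; move=> /(_ i0 isT) /eqP.
  rewrite mulf_eq0 fmorph_eq0 gt_eqF //= -normCK expf_eq0 /= normr_eq0.
  by apply/negP.
have SN : S = z * N.
  rewrite mulr_sumr; apply: eq_bigr => j _.
  transitivity ((\sum_i w i * toC (a i j)) * (w j)^*).
    by rewrite mulr_suml; apply: eq_bigr => i _; apply: mulCA3.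
  by rewrite heig !mulrA.
have Sc : S^* = S.
  rewrite /S rmorph_sum exchange_big; apply: eq_bigr => i _.
  rewrite rmorph_sum; apply: eq_bigr => j _.
  rewrite !rmorphM /= toC_conj conjCK asym.
  by congr (_ * _); apply: mulrC.
have Nc : N^* = N by apply: conj_Creal; apply: ger0_real.
rewrite (CrealE z); apply/eqP.
have : (z^* - z) * N = 0.
  rewrite mulrBl -{1}Nc -rmorphM -SN.
  by apply: (etrans _ (subrr S)); congr (_ - _); exact: Sc.
by move/eqP; rewrite mulf_eq0 (negbTE Nn0) orbF subr_eq0 => /eqP.
Qed.
End Cx.

Lemma char_poly_tr (F : fieldType) n (A : 'M[F]_n) : char_poly A^T = char_poly A.
Proof.
rewrite /char_poly -det_tr; congr (\det _); apply/matrixP => i j.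
by rewrite /char_poly_mx !mxE eq_sym.
Qed.

Lemma eigenvalue_tr (F : fieldType) n (A : 'M[F]_n) l : eigenvalue A^T l = eigenvalue A l.
Proof. by rewrite !eigenvalue_root_char char_poly_tr. Qed.

Lemma nz_row (K : fieldType) k m (Y : 'M[K]_(k, m)) : Y != 0 -> exists i, row i Y != 0.
Proof.
move=> Yn0; apply/existsP; apply: contraR Yn0; rewrite negb_exists => /forallP h.
apply/eqP/row_matrixP => i; rewrite row0; exact/eqP/negPn/h.
Qed.

Lemma prod_eig (K : fieldType) m (A : 'M[K]_m) (hA1 : A *m (const_mx 1 : 'cV_m) = const_mx 1) :
  forall (s : seq K) k (Y : 'M[K]_(k, m)), Y != 0 ->
  Y *m \prod_(z <- s) (A - z%:M) = 0 -> Y *m (const_mx 1 : 'cV_m) = 0 ->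
  exists z, z \in s /\ exists2 y : 'rV_m, y != 0 & y *m A = z *: y /\ y *m (const_mx 1 : 'cV_m) = 0.
Proof.
elim=> [|z s IH] k Y Yn0.
  by rewrite big_nil mulmx1 => /eqP; rewrite (negbTE Yn0).
have -> : \prod_(z0 <- z :: s) (A - z0%:M) = (A - z%:M) *m \prod_(z0 <- s) (A - z0%:M).
  by rewrite big_cons.
rewrite mulmxA => hY h1.
have h1' : Y *m (A - z%:M) *m (const_mx 1 : 'cV_m) = 0.
  by rewrite -mulmxA mulmxBl hA1 mul_scalar_mx mulmxBr -scalemxAr h1 scaler0 subrr.
have [Y0|Yn0'] := eqVneq (Y *m (A - z%:M)) 0.
  have [i ri] := nz_row _ _ _ _ Yn0.
  exists z; split; first by rewrite inE eqxx.
  exists (row i Y) => //; split.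
    apply/eqP; rewrite -subr_eq0 -mul_mx_scalar -mulmxBr -row_mul Y0 row0 //.
  by rewrite -row_mul h1 row0.
have [z' [z's rest]] := IH _ _ Yn0' hY h1'.
by exists z'; split => //; rewrite inE z's orbT.
Qed.

Lemma horner_intertwine (K : comNzRingType) m n (A : 'M[K]_m.+1) (B : 'M[K]_n.+1)
  (X : 'M[K]_(n.+1, m.+1)) : X *m A = B *m X ->
  forall p, X *m horner_mx A p = horner_mx B p *m X.
Proof.
move=> hX; elim/poly_ind => [|p c IH]; first by rewrite !rmorph0 mulmx0 mul0mx.
rewrite !rmorphD !rmorphM /= !horner_mx_X !horner_mx_C.
rewrite -!mulmxE mulmxDr mulmxDl mulmxA IH -[horner_mx B p *m X *m A]mulmxA hX mulmxA.
by rewrite mul_mx_scalar mul_scalar_mx.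
Qed.

Lemma divmulr (K : fieldType) (y a p : K) : y / p * a = y * (a / p).
Proof. by rewrite mulrAC -mulrA. Qed.

Lemma sum_pos (R : realDomainType) k (pa : 'I_k.+1 -> R) : (forall i, 0 < pa i) -> 0 < \sum_i pa i.
Proof.
move=> h; rewrite (bigD1 ord0) //=.
have h0 : 0 <= \sum_(i | i != ord0) pa i by apply: sumr_ge0 => i _; apply: ltW.
have := h ord0; lra.
Qed.

Lemma conv_generic (R : rcfType) m n (a : 'I_m -> 'I_m -> R) (pa : 'I_m -> R)
  (TB : 'M[R]_n) (X : 'M[R]_(n, m)) :
  (forall i j, 0 <= a i j) -> (forall i j, a i j = a j i) ->
  (forall i, pa i = \sum_j a i j) -> (forall i, 0 < pa i) ->
  (forall f : 'I_m -> R[i], (forall i j, 0 < a i j -> f i = f j) -> forall i j, f i = f j) ->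
  X != 0 -> X *m (\matrix_(i, j) (a i j / pa i)) = TB^T *m X ->
  X *m (const_mx 1 : 'cV_m) = 0 ->
  exists l, l != 1 /\ eigenvalue (\matrix_(i, j) (a i j / pa i)) l /\ eigenvalue TB l.
Proof.
case: m a pa X => [|m] a pa X a0 asym hpa pa0 hconn Xn0 hX hX1.
  by move: Xn0; rewrite (_ : X = 0) ?eqxx //; apply/matrixP => i [].
case: n TB X Xn0 hX hX1 => [|n] TB X Xn0 hX hX1.
  by move: Xn0; rewrite (_ : X = 0) ?eqxx //; apply/matrixP => [[]].
set TA := \matrix_(i, j) (a i j / pa i).
have hA1 : TA *m (const_mx 1 : 'cV_m.+1) = const_mx 1.
  apply/matrixP => i j; rewrite !mxE.
  under eq_bigr do rewrite !mxE mulr1.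
  by rewrite -mulr_suml -hpa divff // gt_eqF.
pose AC := map_mx (real_complex R) TA.
pose BC := map_mx (real_complex R) TB^T.
pose XC := map_mx (real_complex R) X.
have hXC : XC *m AC = BC *m XC by rewrite -!map_mxM hX.
have hAC1 : AC *m (const_mx 1 : 'cV_m.+1) = const_mx 1.
  by rewrite -(rmorph1 (real_complex R)) -map_const_mx -map_mxM hA1.
have hXC1 : XC *m (const_mx 1 : 'cV_m.+1) = 0.
  by rewrite -(rmorph1 (real_complex R)) -map_const_mx -map_mxM hX1 map_mx0.
have XCn0 : XC != 0 by rewrite map_mx_eq0.
have [s hs] := closed_field_poly_normal (char_poly BC).
rewrite (monicP (char_poly_monic BC)) scale1r in hs.
have H0 : XC *m \prod_(z <- s) (AC - z%:M) = 0.
  have := @horner_intertwine _ _ _ _ _ _ hXC (char_poly BC).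
  rewrite Cayley_Hamilton mul0mx {1}hs rmorph_prod.
  by under eq_bigr do rewrite rmorphB /= horner_mx_X horner_mx_C.
have [z [zs [y yn0 [hy hy1]]]] := prod_eig _ _ _ hAC1 s _ _ XCn0 H0 hXC1.
pose w := fun i => y 0 i / real_complex R (pa i).
have pan0 : forall i, real_complex R (pa i) != 0 by move=> i; rewrite fmorph_eq0 gt_eqF.
have heig : forall j, \sum_i w i * real_complex R (a i j) = z * real_complex R (pa j) * w j.
  move=> j; have := congr1 (fun M : 'rV[complex R]_m.+1 => M 0 j) hy; rewrite !mxE => e.
  rewrite -mulrA [real_complex R (pa j) * _]mulrC divfK // -e.
  by apply: eq_bigr => i _; rewrite !mxE fmorph_div divmulr.
have wnz : exists i, w i != 0.
  have [i yi] : exists i, y 0 i != 0.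
    apply/existsP; apply: contraR yn0; rewrite negb_exists => /forallP h.
    by apply/eqP/matrixP => i0 j; rewrite ord1 mxE; apply/eqP/negPn/h.
  by exists i; rewrite /w mulf_neq0 // invr_neq0.
have zr := @eig_real R _ a pa w z a0 asym pa0 wnz heig.
have [l zl] := complex_realP _ zr.
exists l; split; last split.
- apply/eqP => l1; subst l.
  have heig' : forall j, \sum_i w i * real_complex R (a i j) = real_complex R (1 * pa j) * w j.
    by move=> j; rewrite heig zl rmorphM.
  have e := @energy R _ a pa 1 w a0 asym hpa (mulr1 1) heig'.
  have wc : forall i j, w i = w j.
    by apply: (hconn w) => i j aij; rewrite (e i j aij) (rmorph1 (real_complex R)) mul1r.
  have := congr1 (fun M : 'M[complex R]_1 => M 0 0) hy1; rewrite !mxE.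
  have yw : forall i, y 0 i = w ord0 * real_complex R (pa i).
    by move=> k; rewrite -(wc k ord0) /w divfK.
  under eq_bigr => k _ do rewrite mxE mulr1 yw.
  rewrite -mulr_sumr -rmorph_sum => /eqP; rewrite mulf_eq0 fmorph_eq0 (gt_eqF (@sum_pos _ _ pa pa0)) orbF.
  by move=> /eqP w0; case: wnz => i; rewrite (wc i ord0) w0 eqxx.
- rewrite eigenvalue_root_char -(fmorph_root (real_complex R)) map_char_poly.
  have ez : eigenvalue AC z by apply/eigenvalueP; exists y.
  by move: ez; rewrite eigenvalue_root_char zl.
- rewrite -eigenvalue_tr eigenvalue_root_char -(fmorph_root (real_complex R)) map_char_poly.
  have rz : root (char_poly BC) z by rewrite hs root_prod_XsubC.
  by move: rz; rewrite zl.
Qed.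

Lemma sumUV (R : realType) (U V : finType) (F : U * V -> R) :
  \sum_(x : U * V) F x = \sum_u \sum_v F (u, v).
Proof. by rewrite pair_big; apply: eq_bigr => -[u v]. Qed.

Lemma le_sum1 (R : realType) (I : finType) (F : I -> R) i :
  (forall j, 0 <= F j) -> F i <= \sum_j F j.
Proof. by move=> h; rewrite (bigD1 i) //= lerDl sumr_ge0. Qed.

Lemma notwd (R : realType) (U V : finType) (alpha : U -> U -> R) (beta : V -> V -> R)
  (h : U * V -> U * V -> R) (k k' : U * V -> R) :
  is_weight alpha -> is_weight beta ->
  (forall x y, alpha x.1 y.1 * beta x.2 y.2 * h x y = alpha y.1 x.1 * beta y.2 x.2 * h y x) ->
  (forall u u' v, \sum_v' alpha u u' * beta v v' * h (u, v) (u', v') = alpha u u' * k (u, v)) ->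
  (forall u v v', \sum_u' alpha u u' * beta v v' * h (u, v) (u', v') = beta v v' * k' (u, v)) ->
  (forall u v, deg beta v * k' (u, v) = deg alpha u * k (u, v)) ->
  (forall u, \sum_v deg alpha u * k (u, v) = 0) ->
  (forall v, \sum_u deg alpha u * k (u, v) = 0) ->
  (exists u v, deg alpha u * k (u, v) != 0) ->
  ~ weakly_disjoint alpha beta.
Proof.
move=> [a0 [asym a1]] [b0 [bsym b1]] hsym hB1 hB2 hkk hM1 hM2 [u0 [v0 hnz]] wd.
pose C := \sum_x \sum_y `|h x y|.
have C0 : 0 <= C by apply: sumr_ge0 => x _; apply: sumr_ge0 => y _.
have hC : forall x y, `|h x y| <= C.
  move=> x y.
  have h1 := @le_sum1 R _ (fun y => `|h x y|) y (fun _ => normr_ge0 _).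
  have h2 := @le_sum1 R _ (fun x => \sum_y `|h x y|) x (fun z => sumr_ge0 _ (fun _ _ => normr_ge0 _)).
  rewrite /C; simpl in h1, h2; lra.
pose eps := (1 + C)^-1.
have eps0 : 0 < eps by rewrite invr_gt0; lra.
have epsC : eps * C <= 1.
  by rewrite /eps ler_pdivrMl ?mul1r; lra.
pose gamma := fun x y : U * V => alpha x.1 y.1 * beta x.2 y.2 * (1 + eps * h x y).
have sumab : forall u v, \sum_u' \sum_v' alpha u u' * beta v v' = deg alpha u * deg beta v.
  move=> u v; rewrite /deg mulr_suml; apply: eq_bigr => u' _.
  by rewrite -mulr_sumr.
have hdeg : forall u v, deg gamma (u, v) = deg alpha u * deg beta v + eps * (deg alpha u * k (u, v)).
  move=> u v; rewrite /deg sumUV /gamma /=.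
  under eq_bigr => u' _ do under eq_bigr => v' _ do rewrite mulrDr mulr1.
  under eq_bigr => u' _ do rewrite big_split /=.
  rewrite big_split /= -/(deg _ _) sumab.
  congr (_ + _); rewrite /deg mulr_suml mulr_sumr; apply: eq_bigr => u' _.
  by rewrite -hB1 mulr_sumr; apply: eq_bigr => v' _; rewrite mulrCA.
have hrow1 : forall u u' v, \sum_vt gamma (u, v) (u', vt) =
    alpha u u' * deg beta v + eps * (alpha u u' * k (u, v)).
  move=> u u' v; rewrite /gamma /=.
  under eq_bigr do rewrite mulrDr mulr1.
  rewrite big_split /= -mulr_sumr; congr (_ + _).
  by rewrite -hB1 mulr_sumr; apply: eq_bigr => v' _; rewrite mulrCA.
have hrow2 : forall u v v', \sum_ut gamma (u, v) (ut, v') =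
    beta v v' * deg alpha u + eps * (beta v v' * k' (u, v)).
  move=> u v v'; rewrite /gamma /=.
  under eq_bigr do rewrite mulrDr mulr1.
  rewrite big_split /= -mulr_suml mulrC; congr (_ + _).
  by rewrite -hB2 mulr_sumr; apply: eq_bigr => u' _; rewrite mulrCA.
have sp : \sum_u deg alpha u = 1 by [].
have sq : \sum_v deg beta v = 1 by [].
have J : weight_joining alpha beta gamma.
  split; [split; [|split] | split; [|split; [|split]]].
  - move=> x y; rewrite /gamma; apply: mulr_ge0; first by apply: mulr_ge0.
    have := hC x y; rewrite ler_norml => /andP [hl _].
    have : 0 <= eps * (h x y + C) by apply: mulr_ge0; [apply: ltW | lra].
    by rewrite mulrDr; lra.
  - move=> x y; rewrite /gamma !mulrDr !mulr1 !(mulrCA _ eps) hsym.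
    by rewrite (asym x.1) (bsym x.2).
  - rewrite sumUV; transitivity (\sum_u \sum_v deg gamma (u, v)) => //.
    under eq_bigr => u _ do under eq_bigr => v _ do rewrite hdeg.
    under eq_bigr => u _ do rewrite big_split /= -mulr_sumr sq mulr1 -mulr_sumr hM1 mulr0 addr0.
    exact: sp.
  - move=> u; under eq_bigr => v _ do rewrite hdeg.
    by rewrite big_split /= -mulr_sumr sq mulr1 -mulr_sumr hM1 mulr0 addr0.
  - move=> v; under eq_bigr => u _ do rewrite hdeg.
    by rewrite big_split /= -mulr_suml sp mul1r -mulr_sumr hM2 mulr0 addr0.
  - by move=> u u' v; rewrite hrow1 hdeg; ring.
  - by move=> u v v'; rewrite hrow2 hdeg -hkk; ring.
have := wd gamma J u0 v0; rewrite hdeg => /eqP.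
rewrite -subr_eq0 addrC addKr mulf_eq0 (negbTE hnz) orbF => /eqP e0.
by move: eps0; rewrite e0 ltxx.
Qed.
Lemma sum_enum (R : realType) (U : finType) (F : U -> R) :
  \sum_(i < #|U|) F (enum_val i) = \sum_u F u.
Proof. by rewrite -(big_enum_val (A := U)). Qed.

Lemma conn_ind (R : realType) (U : finType) (alpha : U -> U -> R) : connected_graph alpha ->
  forall (T : Type) (f : U -> T), (forall u u', 0 < alpha u u' -> f u = f u') ->
  forall u u', f u = f u'.
Proof.
move=> hc T f hf u u'; have [->//|ne] := eqVneq u u'.
have /connectP [p hp ->] := hc u u' ne.
elim: p u hp {ne} => [|x p IH] u //= /andP [e hp].
by rewrite (hf u x e) (IH x hp).
Qed.

Lemma pos_deg (R : realType) (U : finType) (alpha : U -> U -> R) :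
  is_weight alpha -> connected_graph alpha -> forall u, 0 < deg alpha u.
Proof.
move=> [a0 [asym a1]] hc u.
have d0 : forall v, 0 <= deg alpha v by move=> v; apply: sumr_ge0.
rewrite lt_def d0 andbT; apply/eqP => du.
have z : forall u', alpha u u' = 0.
  by move=> u'; apply: (psumr_eq0P (fun j _ => a0 u j) du).
have [v dv] : exists v, deg alpha v != 0.
  apply/existsP; apply: contraT; rewrite negb_exists => /forallP h.
  move: a1; rewrite (eq_bigr (fun _ => 0)) ?big1 // => [/eqP|v _].
    by rewrite eq_sym oner_eq0.
  by apply/eqP/negPn/h.
have uv : u != v by apply: contraNneq dv => <-; rewrite du.
move: (hc u v uv) => /connectP [[|x p] /= hp hv].
  by rewrite hv eqxx in uv.
by move: hp => /andP [e _]; move: e; rewrite /edge_rel z ltxx.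
Qed.

Lemma eig_fun (R : realType) (U : finType) (alpha : U -> U -> R) l :
  (forall u, 0 < deg alpha u) -> eigenvalue (trans_mx alpha) l ->
  exists f : U -> R, (exists u, f u != 0) /\
    forall u', \sum_u f u * alpha u u' = l * (deg alpha u' * f u').
Proof.
move=> pd /eigenvalueP [x hx xn0].
exists (fun u => x 0 (enum_rank u) / deg alpha u); split.
  have [i xi] : exists i, x 0 i != 0.
    apply/existsP; apply: contraR xn0; rewrite negb_exists => /forallP h.
    by apply/eqP/matrixP => i0 j; rewrite ord1 mxE; apply/eqP/negPn/h.
  by exists (enum_val i); rewrite enum_valK mulf_neq0 // invr_neq0 // gt_eqF.
move=> u'; have := congr1 (fun M : 'rV[R]_#|U| => M 0 (enum_rank u')) hx; rewrite !mxE => e.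
rewrite [deg alpha u' * _]mulrC divfK ?gt_eqF // -e -sum_enum.
by apply: eq_bigr => i _; rewrite enum_valK !mxE enum_rankK divmulr.
Qed.

Lemma inv_helper (K : fieldType) (p a r : K) : p != 0 -> p^-1 * (a * r) = r * (a / p).
Proof. by move=> _; ring. Qed.

Lemma cancel3 (K : fieldType) (p q a : K) : p != 0 -> p * q * (a / p) = q * a.
Proof. by move=> h; field. Qed.

Lemma cancel4 (K : fieldType) (p a b : K) : p != 0 -> a * b = a / p * (b * p).
Proof. by move=> h; field. Qed.

Lemma intertw (R : realType) (U V : finType) (alpha : U -> U -> R) (beta : V -> V -> R) gamma :
  weight_joining alpha beta gamma -> (forall u, 0 < deg alpha u) -> (forall v, 0 < deg beta v) ->
  is_weight alpha -> is_weight beta ->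
  forall u' v, \sum_u (deg gamma (u, v) - deg alpha u * deg beta v) * (alpha u u' / deg alpha u)
   = \sum_v' (beta v' v / deg beta v') * (deg gamma (u', v') - deg alpha u' * deg beta v').
Proof.
move=> [[g0 [gsym g1]] [ha1 [ha2 [hb1 hb2]]]] pp pq [a0 [asym a1]] [b0 [bsym b1]] u' v.
have L : forall u, deg gamma (u, v) * (alpha u u' / deg alpha u) = \sum_vt gamma (u, v) (u', vt).
  move=> u; have pu : deg alpha u != 0 by rewrite gt_eqF.
  by rewrite -[RHS](mulKf pu) hb1 inv_helper.
have Rr : forall v', (beta v' v / deg beta v') * deg gamma (u', v') = \sum_ut gamma (u', v') (ut, v).
  move=> v'; have qv : deg beta v' != 0 by rewrite gt_eqF.
  by rewrite -[RHS](mulKf qv) hb2 inv_helper // mulrC.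
under eq_bigr do rewrite mulrBl L.
under [RHS]eq_bigr do rewrite mulrBr Rr.
rewrite !sumrB; congr (_ - _).
  rewrite exchange_big; apply: eq_bigr => vt _; apply: eq_bigr => ut _; exact: gsym.
have pu' : deg alpha u' = \sum_u alpha u u' by apply: eq_bigr => u _; rewrite asym.
have qv : deg beta v = \sum_v' beta v' v by apply: eq_bigr => v' _; rewrite bsym.
transitivity (deg beta v * deg alpha u').
  rewrite pu' mulr_sumr; apply: eq_bigr => u _.
  by rewrite cancel3 // gt_eqF.
rewrite qv mulr_suml; apply: eq_bigr => v' _.
by rewrite (@cancel4 _ (deg beta v')) // gt_eqF.
Qed.

Lemma sum_zero (R : realType) (U : finType) (alpha : U -> U -> R) (f : U -> R) l :
  is_weight alpha -> l != 1 ->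
  (forall u', \sum_u f u * alpha u u' = l * (deg alpha u' * f u')) ->
  \sum_u deg alpha u * f u = 0.
Proof.
move=> [a0 [asym a1]] l1 hf.
have e : \sum_u' \sum_u f u * alpha u u' = l * \sum_u deg alpha u * f u.
  by rewrite mulr_sumr; apply: eq_bigr => u' _; rewrite hf.
move: e; rewrite exchange_big.
under eq_bigr => u _ do rewrite -mulr_sumr -/(deg alpha u) mulrC.
move=> /eqP; rewrite -subr_eq0 -{1}[\sum_u _]mul1r -mulrBl mulf_eq0 subr_eq0 eq_sym (negbTE l1) /=.
by move/eqP.
Qed.

Lemma right_eig (R : realType) (U : finType) (alpha : U -> U -> R) (f : U -> R) l :
  is_weight alpha ->
  (forall u', \sum_u f u * alpha u u' = l * (deg alpha u' * f u')) ->
  forall u, \sum_u' alpha u u' * f u' = l * (deg alpha u * f u).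
Proof.
move=> [a0 [asym a1]] hf u; rewrite -hf; apply: eq_bigr => u' _.
by rewrite asym mulrC.
Qed.

Lemma alternation (R : realType) (U : finType) (alpha : U -> U -> R) (f : U -> R) :
  is_weight alpha ->
  (forall u', \sum_u f u * alpha u u' = -1 * (deg alpha u' * f u')) ->
  forall u u', 0 < alpha u u' -> f u = - f u'.
Proof.
move=> [a0 [asym a1]] hf u u' a.
have hs : (-1 : R) * -1 = 1 by rewrite mulrNN mulr1.
have hrel : forall j, \sum_i real_complex R (f i) * real_complex R (alpha i j)
    = real_complex R (-1 * deg alpha j) * real_complex R (f j).
  by move=> j; rewrite -rmorphM -mulrA -hf rmorph_sum; apply: eq_bigr => i _; rewrite rmorphM.
have := @energy R U alpha (deg alpha) (-1) (fun u => real_complex R (f u)) a0 asym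
  (fun _ => erefl) hs hrel u u' a.
by rewrite -rmorphM mulN1r => /complexI.
Qed.

Theorem theorem5p2 (R : realType) (U V : finType)
  (alpha : U -> U -> R) (beta : V -> V -> R)
  (halpha : is_weight alpha) (hbeta : is_weight beta)
  (hG : connected_graph alpha) (hH : connected_graph beta) :
  weakly_disjoint alpha beta <->
  (forall a : R, eigenvalue (trans_mx alpha) a ->
                 eigenvalue (trans_mx beta) a -> a = 1).
Proof.
have pp := @pos_deg R U alpha halpha hG.
have pq := @pos_deg R V beta hbeta hH.
have [a0 [asym a1]] := halpha.
have [b0 [bsym b1]] := hbeta.
split.
- move=> wd l el el'; apply/eqP; apply: contraT => l1; exfalso.
  have [f [[u0 fu0] hf]] := @eig_fun R U alpha l pp el.
  have [g [[v0 gv0] hg]] := @eig_fun R V beta l pq el'.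
  have Sf := @sum_zero R U alpha f l halpha l1 hf.
  have Sg := @sum_zero R V beta g l hbeta l1 hg.
  have hfr := @right_eig R U alpha f l halpha hf.
  have hgr := @right_eig R V beta g l hbeta hg.
  have [lm1|lm1] := eqVneq l (-1).
  + subst l.
    have altf := @alternation R U alpha f halpha hf.
    have altg := @alternation R V beta g hbeta hg.
    apply: (@notwd R U V alpha beta (fun x y => f x.1 * g x.2)
      (fun x => deg beta x.2 * f x.1 * g x.2) (fun x => deg alpha x.1 * f x.1 * g x.2)
      halpha hbeta _ _ _ _ _ _ _ wd).
    * move=> [x1 x2] [y1 y2] /=; rewrite (asym x1) (bsym x2).
      have [ax|ax] := eqVneq (alpha y1 x1) 0; first by rewrite ax !mul0r.
      have [bx|bx] := eqVneq (beta y2 x2) 0; first by rewrite bx mulr0 !mul0r.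
      have ap : 0 < alpha x1 y1 by rewrite lt_def asym ax a0.
      have bp : 0 < beta x2 y2 by rewrite lt_def bsym bx b0.
      by rewrite (altf _ _ ap) (altg _ _ bp) mulrNN.
    * move=> u u' v /=; rewrite -mulr_suml -mulr_sumr -/(deg beta v); ring.
    * move=> u v v' /=; rewrite -mulr_suml -mulr_suml -/(deg alpha u); ring.
    * by move=> u v /=; ring.
    * move=> u /=.
      transitivity (\sum_v (deg alpha u * f u) * (deg beta v * g v)).
        by apply: eq_bigr => v _; ring.
      by rewrite -mulr_sumr Sg mulr0.
    * move=> v /=.
      transitivity (\sum_u (deg beta v * g v) * (deg alpha u * f u)).
        by apply: eq_bigr => u _; ring.
      by rewrite -mulr_sumr Sf mulr0.
    * exists u0, v0 => /=.
      by rewrite !mulf_neq0 // gt_eqF.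
  + have l2 : 1 - l ^+ 2 != 0.
      rewrite (_ : 1 - l ^+ 2 = (1 - l) * (1 + l)); last by ring.
      rewrite mulf_neq0 //; first by rewrite subr_eq0 eq_sym.
      by rewrite addrC -(opprK 1) subr_eq0.
    apply: (@notwd R U V alpha beta
      (fun x y => f x.1 * g x.2 + f y.1 * g y.2 - l * (f x.1 * g y.2 + f y.1 * g x.2))
      (fun x => (1 - l ^+ 2) * deg beta x.2 * f x.1 * g x.2)
      (fun x => (1 - l ^+ 2) * deg alpha x.1 * f x.1 * g x.2)
      halpha hbeta _ _ _ _ _ _ _ wd).
    * by move=> [x1 x2] [y1 y2] /=; rewrite (asym x1) (bsym x2); ring.
    * move=> u u' v /=.
      transitivity (\sum_v' (beta v v' * (alpha u u' * (f u * g v - l * f u' * g v))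
                     + alpha u u' * (f u' - l * f u) * (beta v v' * g v'))).
        by apply: eq_bigr => v' _; ring.
      by rewrite big_split /= -mulr_suml -/(deg beta v) -mulr_sumr hgr; ring.
    * move=> u v v' /=.
      transitivity (\sum_u' alpha u u' * (beta v v' * (f u * g v - l * f u * g v'))
                     + \sum_u' beta v v' * (g v' - l * g v) * (alpha u u' * f u')).
        by rewrite -big_split /=; apply: eq_bigr => u' _; ring.
      by rewrite -mulr_suml -/(deg alpha u) -mulr_sumr hfr; ring.
    * by move=> u v /=; ring.
    * move=> u /=.
      transitivity (\sum_v (deg alpha u * (1 - l ^+ 2) * f u) * (deg beta v * g v)).
        by apply: eq_bigr => v _; ring.
      by rewrite -mulr_sumr Sg mulr0.
    * move=> v /=.
      transitivity (\sum_u ((1 - l ^+ 2) * deg beta v * g v) * (deg alpha u * f u)).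
        by apply: eq_bigr => u _; ring.
      by rewrite -mulr_sumr Sf mulr0.
    * exists u0, v0 => /=.
      by rewrite !mulf_neq0 // gt_eqF.
- move=> H gamma J u v; apply/eqP; apply: contraT => ne; exfalso.
  pose X : 'M[R]_(#|V|, #|U|) := \matrix_(k, i)
    (deg gamma (enum_val i, enum_val k) - deg alpha (enum_val i) * deg beta (enum_val k)).
  have hpa : forall i : 'I_#|U|, deg alpha (enum_val i) = \sum_(j < #|U|) alpha (enum_val i) (enum_val j).
    by move=> i; rewrite /deg (@sum_enum _ _ (alpha (enum_val i))).
  have hconn : forall f : 'I_#|U| -> complex R,
      (forall i j, 0 < alpha (enum_val i) (enum_val j) -> f i = f j) -> forall i j, f i = f j.
    move=> f hf i j.
    have := @conn_ind R U alpha hG _ (fun u => f (enum_rank u)) _ (enum_val i) (enum_val j).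
    rewrite !enum_valK; apply => x y a; apply: hf; by rewrite !enum_rankK.
  have Xn0 : X != 0.
    apply/eqP => /matrixP /(_ (enum_rank v) (enum_rank u)); rewrite !mxE !enum_rankK.
    by move/eqP; rewrite subr_eq0 (negbTE ne).
  have hX : X *m trans_mx alpha = (trans_mx beta)^T *m X.
    apply/matrixP => k j; rewrite !mxE.
    under eq_bigr do rewrite !mxE.
    under [RHS]eq_bigr do rewrite !mxE.
    rewrite (@sum_enum _ _ (fun u => (deg gamma (u, enum_val k) - deg alpha u * deg beta (enum_val k))
               * (alpha u (enum_val j) / deg alpha u))).
    rewrite (@sum_enum _ _ (fun v => (beta v (enum_val k) / deg beta v)
               * (deg gamma (enum_val j, v) - deg alpha (enum_val j) * deg beta v))).
    exact: (@intertw R U V alpha beta gamma J pp pq halpha hbeta).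
  have hX1 : X *m (const_mx 1 : 'cV_#|U|) = 0.
    apply/matrixP => k j; rewrite !mxE.
    under eq_bigr do rewrite !mxE mulr1.
    rewrite (@sum_enum _ _ (fun u => deg gamma (u, enum_val k) - deg alpha u * deg beta (enum_val k))).
    have [_ [_ [ha2 _]]] := J.
    by rewrite sumrB ha2 -mulr_suml a1 mul1r subrr.
  have [l [l1 [e1 e2]]] := @conv_generic R #|U| #|V|
    (fun i j => alpha (enum_val i) (enum_val j)) (fun i => deg alpha (enum_val i))
    (trans_mx beta) X (fun i j => a0 _ _) (fun i j => asym _ _) hpa (fun i => pp _) hconn Xn0 hX hX1.
  by move: (H l e1 e2); apply/eqP.
Qed.
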